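(* Let $\mathcal{X}$ be a nonempty open convex subset of $\mathbb{R}^n$ and let $\textbf{F}:\mathcal{X}\to I(\mathbb{R})$ be $gH$-differentiable on $\mathcal{X}$. If $\textbf{F}$ is convex on $\mathcal{X}$, then \[(y-x)^T\odot\nabla\textbf{F}(x)\preceq\textbf{F}(y)\ominus_{gH}\textbf{F}(x)\quad\text{for all }x,y\in\mathcal{X}.\]
   Context: $I(\mathbb{R})$: closed bounded intervals $\textbf{A}=[\underline{a},\overline{a}]$ with Moore arithmetic ($\oplus$ endpointwise; $\lambda\odot\textbf{A}=[\lambda\underline{a},\lambda\overline{a}]$ if $\lambda\ge0$, $[\lambda\overline{a},\lambda\underline{a}]$ if $\lambda<0$); $gH$-difference $\textbf{A}\ominus_{gH}\textbf{B}=[\min\{\underline{a}-\underline{b},\overline{a}-\overline{b}\},\max\{\underline{a}-\underline{b},\overline{a}-\overline{b}\}]$; limits in the norm $\max\{|\underline{a}|,|\overline{a}|\}$. $\textbf{A}\preceq\textbf{B}$ iff $\underline{a}\le\underline{b}$ and $\overline{a}\le\overline{b}$. An IVF is $\textbf{F}(x)=[\underline{f}(x),\overline{f}(x)]$. $D_i\textbf{F}(x)=\lim_{h\to0}\frac1h\odot(\textbf{F}(x+he_i)\ominus_{gH}\textbf{F}(x))$, $\nabla\textbf{F}(x)=(D_1\textbf{F}(x),\dots,D_n\textbf{F}(x))^T$, $d^T\odot\nabla\textbf{F}(x)=\bigoplus_i d_i\odot D_i\textbf{F}(x)$. Linear IVF: $\textbf{L}(x)=\bigoplus_i x_i\odot\textbf{L}(e_i)$.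 $\textbf{F}$ is $gH$-differentiable at $\bar{x}$ if there exist a linear IVF $\textbf{L}_{\bar{x}}$, an IVF $\textbf{E}(\textbf{F}(\bar{x});d)$ and $\delta>0$ with $(\textbf{F}(\bar{x}+d)\ominus_{gH}\textbf{F}(\bar{x}))\ominus_{gH}\textbf{L}_{\bar{x}}(d)=\lVert d\rVert\odot\textbf{E}(\textbf{F}(\bar{x});d)$ for $\lVert d\rVert<\delta$ and $\textbf{E}\to\textbf{0}$ as $\lVert d\rVert\to0$; on $\mathcal{X}$ means at every point. $\textbf{F}$ is convex if $\textbf{F}(\lambda x_1+(1-\lambda)x_2)\preceq\lambda\odot\textbf{F}(x_1)\oplus(1-\lambda)\odot\textbf{F}(x_2)$ for all $x_1,x_2\in\mathcal{X}$, $\lambda\in[0,1]$. *)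

(* Defs.v *)
From HB Require Import structures.
From mathcomp Require Import all_boot all_order all_algebra.
From mathcomp Require Import all_classical all_reals all_analysis.
Set Implicit Arguments. Unset Strict Implicit. Unset Printing Implicit Defensive.
Import Order.TTheory GRing.Theory Num.Theory.
Import numFieldNormedType.Exports.
Local Open Scope classical_set_scope.
Local Open Scope ring_scope.

Section IntervalArith.
Variable R : realType.

(* A closed bounded interval [lo, hi] is represented by the pair (lo, hi);
   it is a genuine element of I(R) when lo <= hi (predicate [iwf]). *)
Definition itv := (R * R)%type.
Definition iwf (A : itv) : Prop := A.1 <= A.2.

Definition iadd (A B : itv) : itv := (A.1 + B.1, A.2 + B.2).
Definition iscale (l : R) (A : itv) : itv :=
  if 0 <= l then (l * A.1, l * A.2) else (l * A.2, l * A.1).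
Definition igH (A B : itv) : itv :=
  (Num.min (A.1 - B.1) (A.2 - B.2), Num.max (A.1 - B.1) (A.2 - B.2)).
Definition inorm (A : itv) : R := Num.max `|A.1| `|A.2|.
Definition ile (A B : itv) : Prop := A.1 <= B.1 /\ A.2 <= B.2.
Definition izero : itv := (0, 0).
Definition isum n (G : 'I_n -> itv) : itv :=
  (\sum_(i < n) (G i).1, \sum_(i < n) (G i).2).

Definition vnorm n (d : 'rV[R]_n) : R := Num.sqrt (\sum_(i < n) d ord0 i ^+ 2).
Definition evec n (i : 'I_n) : 'rV[R]_n := delta_mx ord0 i.

Definition idot n (d : 'rV[R]_n) (G : 'I_n -> itv) : itv :=
  isum (fun i => iscale (d ord0 i) (G i)).
(* linear IVF L(x) = (+)_i x_i (.) L(e_i), given by Le i = L(e_i) *)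
Definition ilin n (Le : 'I_n -> itv) (x : 'rV[R]_n) : itv := idot x Le.

Definition ivf_on n (X : set 'rV[R]_n) (F : 'rV[R]_n -> itv) : Prop :=
  forall x, X x -> iwf (F x).

Definition is_partial_gH n (F : 'rV[R]_n -> itv) (x : 'rV[R]_n) (i : 'I_n)
  (D : itv) : Prop :=
  forall eps : R, 0 < eps -> exists delta : R, 0 < delta /\
    forall h : R, 0 < `|h| < delta ->
      inorm (igH (iscale h^-1 (igH (F (x + h *: evec i)) (F x))) D) < eps.

Definition gH_differentiable_at n (F : 'rV[R]_n -> itv) (xb : 'rV[R]_n) : Prop :=
  exists (Le : 'I_n -> itv) (E : 'rV[R]_n -> itv) (delta : R),
    (forall i, iwf (Le i)) /\ (forall d, iwf (E d)) /\ 0 < delta /\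
    (forall d, vnorm d < delta ->
        igH (igH (F (xb + d)) (F xb)) (ilin Le d) = iscale (vnorm d) (E d)) /\
    (forall eps : R, 0 < eps -> exists eta : R, 0 < eta /\
        forall d, 0 < vnorm d < eta -> inorm (E d) < eps).

Definition gH_differentiable_on n (X : set 'rV[R]_n) (F : 'rV[R]_n -> itv) : Prop :=
  forall x, X x -> gH_differentiable_at F x.

Definition convex_set_rV n (X : set 'rV[R]_n) : Prop :=
  forall x1 x2 (l : R), X x1 -> X x2 -> 0 <= l <= 1 ->
    X (l *: x1 + (1 - l) *: x2).

Definition convex_ivf n (X : set 'rV[R]_n) (F : 'rV[R]_n -> itv) : Prop :=
  forall x1 x2 (l : R), X x1 -> X x2 -> 0 <= l <= 1 ->
    ile (F (l *: x1 + (1 - l) *: x2)) (iadd (iscale l (F x1)) (iscale (1 - l) (F x2))).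

End IntervalArith.

(* Main.v *)
Require Import Defs.
From HB Require Import structures.
From mathcomp Require Import all_boot all_order all_algebra.
From mathcomp Require Import all_classical all_reals all_analysis.
From mathcomp Require Import lra.
Import Order.TTheory GRing.Theory Num.Theory.
Import numFieldNormedType.Exports.
Local Open Scope classical_set_scope.
Local Open Scope ring_scope.

Set Implicit Arguments. Unset Strict Implicit.
Section Helpers.
Variable R : realType.
Implicit Types (A B C P E : itv R).

Lemma inorm_igH A B : inorm (igH A B) = Num.max `|A.1 - B.1| `|A.2 - B.2|.
Proof.
rewrite /inorm /igH /=.
rewrite [Num.min _ _]minEle [Num.max (_ - _) _]maxEle.
case: (leP (A.1 - B.1)) => h //=.
exact: maxC.
Qed.

Lemma inorm_scale v E : 0 <= v -> inorm (iscale v E) = v * inorm E.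
Proof.
move=> hv; rewrite /iscale hv /inorm /= !normrM (ger0_norm hv) maxr_pMr //.
Qed.

Lemma igH_bound1 P C : `|P.1 - C.1| <= inorm (igH P C).
Proof. by rewrite inorm_igH le_max lexx. Qed.
Lemma igH_bound2 P C : `|P.2 - C.2| <= inorm (igH P C).
Proof. by rewrite inorm_igH le_max lexx orbT. Qed.

Lemma vnorm_scale n t (d : 'rV[R]_n) : 0 <= t -> vnorm (t *: d) = t * vnorm d.
Proof.
move=> ht; rewrite /vnorm.
under eq_bigr do rewrite mxE exprMn.
rewrite -mulr_sumr sqrtrM ?sqrtr_sqr ?ger0_norm //; exact: sqr_ge0.
Qed.

Lemma vnorm_gt0 n (d : 'rV[R]_n) : d != 0 -> 0 < vnorm d.
Proof.
move=> hd; rewrite /vnorm sqrtr_gt0 lt_def sumr_ge0 ?andbT; last by move=> i _; exact: sqr_ge0.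
apply: contra hd; rewrite psumr_eq0; last by move=> i _; exact: sqr_ge0.
move/allP => H; apply/eqP/matrixP => i j; rewrite ord1 mxE.
have := H j (mem_index_enum j); rewrite /= sqrf_eq0 => /eqP //.
Qed.

Lemma vnorm_evec n (h : R) (i : 'I_n) : vnorm (h *: evec R i) = `|h|.
Proof.
rewrite /vnorm (bigD1 i) //= big1 ?addr0.
  by rewrite !mxE !eqxx /= mulr1 sqrtr_sqr.
by move=> j hj; rewrite !mxE !eqxx /= (negbTE hj) mulr0 expr0n.
Qed.

Lemma ilin_scale1 n (Le : 'I_n -> itv R) t d : 0 < t ->
  (ilin Le (t *: d)).1 = t * (ilin Le d).1.
Proof.
move=> ht; rewrite /ilin /idot /isum /= mulr_sumr; apply: eq_bigr => i _.
rewrite mxE /iscale pmulr_rge0 //; case: ifP => _ /=; by rewrite mulrA.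
Qed.
Lemma ilin_scale2 n (Le : 'I_n -> itv R) t d : 0 < t ->
  (ilin Le (t *: d)).2 = t * (ilin Le d).2.
Proof.
move=> ht; rewrite /ilin /idot /isum /= mulr_sumr; apply: eq_bigr => i _.
rewrite mxE /iscale pmulr_rge0 //; case: ifP => _ /=; by rewrite mulrA.
Qed.

Lemma ilin_evec n (Le : 'I_n -> itv R) h i : ilin Le (h *: evec R i) = iscale h (Le i).
Proof.
rewrite /ilin /idot /isum (bigD1 i) //= [X in (_, X)](bigD1 i) //=.
rewrite !big1 ?addr0.
- by rewrite !mxE !eqxx /= mulr1; case: (iscale h (Le i)).
- by move=> j hj; rewrite !mxE !eqxx /= (negbTE hj) mulr0 /iscale lexx /= mul0r.
- by move=> j hj; rewrite !mxE !eqxx /= (negbTE hj) mulr0 /iscale lexx /= mul0r.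
Qed.

Lemma idot0 n (Le : 'I_n -> itv R) : idot 0 Le = (0, 0).
Proof.
rewrite /idot /isum !big1 //.
- by move=> j _; rewrite mxE /iscale lexx /= mul0r.
- by move=> j _; rewrite mxE /iscale lexx /= mul0r.
Qed.

Lemma inorm_partial h P C : h != 0 ->
  inorm (igH (iscale h^-1 P) C) = `|h|^-1 * inorm (igH P (iscale h C)).
Proof.
move=> h0; rewrite !inorm_igH /iscale invr_ge0.
have hn : 0 < `|h| by rewrite normr_gt0.
have E1 a c : `|h^-1 * a - c| = `|h|^-1 * `|a - h * c|.
  by rewrite -normfV -normrM mulrBr mulrA mulVf // mul1r.
case: ifP => hh /=; rewrite !E1 maxr_pMr ?invr_ge0 ?normr_ge0 //.
by rewrite maxC.
Qed.


Lemma core (t v e eps a1 a2 b1 b2 l1 l2 : R) :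
  0 < t -> 0 <= v -> e < eps -> a1 <= t * b1 -> a2 <= t * b2 ->
  `|Num.min a1 a2 - t * l1| <= t * v * e ->
  `|Num.max a1 a2 - t * l2| <= t * v * e ->
  l1 <= Num.min b1 b2 + v * eps /\ l2 <= Num.max b1 b2 + v * eps.
Proof.
move=> t0 v0 he h1 h2 n1 n2.
have tv0 : 0 <= t * v by rewrite mulr_ge0 // ltW.
have hs : t * v * e <= t * v * eps by rewrite ler_wpM2l // ltW.
move: n1 n2; rewrite !ler_norml => /andP [n1 _] /andP [n2 _].
have E : forall l b, t * l <= t * b + t * v * eps -> l <= b + v * eps.
  by move=> l b; rewrite -mulrA -mulrDr ler_pM2l.
split; apply: E.
  have m1 : Num.min a1 a2 <= Num.min (t * b1) (t * b2).
    by rewrite le_min !ge_min h1 h2 orbT.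
  rewrite minr_pMr; last exact: ltW.
  move: n1 m1 hs.
  move: (t * l1) (t * v * e) (t * v * eps) (Num.min a1 a2) (Num.min (t * b1) (t * b2)).
  move=> *; lra.
have m2 : Num.max a1 a2 <= Num.max (t * b1) (t * b2).
  by rewrite ge_max !le_max h1 h2 orbT.
rewrite maxr_pMr; last exact: ltW.
  move: n2 m2 hs.
move: (t * l2) (t * v * e) (t * v * eps) (Num.max a1 a2) (Num.max (t * b1) (t * b2)).
move=> *; lra.
Qed.
End Helpers.
Unset Implicit Arguments. Set Strict Implicit.

Theorem theorem3p3 (R : realType) (n : nat) (X : set 'rV[R]_n)
  (F : 'rV[R]_n -> itv R) :
  X !=set0 -> open X -> convex_set_rV X ->
  ivf_on X F -> gH_differentiable_on X F -> convex_ivf X F ->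
  forall x y, X x -> X y ->
    exists grad : 'I_n -> itv R,
      (forall i, iwf (grad i) /\ is_partial_gH F x i (grad i)) /\
      ile (idot (y - x) grad) (igH (F y) (F x)).
Proof.
move=> _ _ _ _ hdiff hconv x y Xx Xy.
have [Le [E [delta [hLe [hE [hd [heq hlim]]]]]]] := hdiff x Xx.
exists Le; split.
  move=> i; split => // eps he.
  have [eta [heta hE']] := hlim eps he.
  exists (Num.min delta eta); split; first by rewrite lt_min hd heta.
  move=> h /andP [h0 hlt]; have hn0 : h != 0 by rewrite -normr_gt0.
  move: hlt; rewrite lt_min => /andP [h1 h2].
  have := heq (h *: evec R i); rewrite vnorm_evec ilin_evec => /(_ h1) eq1.
  rewrite inorm_partial // eq1 inorm_scale ?normr_ge0 // mulrA mulVf ?mul1r ?normr_eq0 //.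
  by apply: hE'; rewrite vnorm_evec h0 h2.
have [->|hyx] := eqVneq y x.
  by rewrite subrr idot0 /ile /igH /= !subrr minEle maxEle !lexx.
set d := y - x.
have dn0 : d != 0 by rewrite subr_eq0.
have vd0 := vnorm_gt0 dn0.
suff key : forall eps, 0 < eps ->
    (idot d Le).1 <= (igH (F y) (F x)).1 + vnorm d * eps /\
    (idot d Le).2 <= (igH (F y) (F x)).2 + vnorm d * eps.
  split; apply/ler_addgt0Pr => e he;
  have := key (e / vnorm d) (divr_gt0 he vd0);
  rewrite [vnorm d * _]mulrC divfK ?gt_eqF //; by case.
move=> eps heps.
have [eta [heta hE']] := hlim eps heps.
set m := Num.min 1 (Num.min (delta / vnorm d) (eta / vnorm d)).
have m0 : 0 < m by rewrite !lt_min ltr01 !divr_gt0.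
have m1 : m <= 1 by rewrite ge_min lexx.
have md : m * vnorm d <= delta.
  by rewrite -ler_pdivlMr // ge_min ge_min lexx orbT.
have me : m * vnorm d <= eta.
  by rewrite -ler_pdivlMr // ge_min ge_min lexx !orbT.
set t := m / 2.
have t0 : 0 < t by rewrite divr_gt0.
have t1 : t <= 1 by rewrite /t; lra.
have tvd : t * vnorm d = m * vnorm d / 2 by rewrite /t mulrAC.
have q0 : 0 < m * vnorm d by rewrite mulr_gt0.
have vdd : vnorm (t *: d) = t * vnorm d := vnorm_scale d (ltW t0).
have hlt1 : vnorm (t *: d) < delta.
  rewrite vdd tvd; move: md q0; move: (m * vnorm d) => q *; lra.
have hlt2 : 0 < vnorm (t *: d) < eta.
  rewrite vdd tvd; move: me q0; move: (m * vnorm d) => q *; apply/andP; split; lra.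
have eq1 := heq _ hlt1.
have xE : x + t *: d = t *: y + (1 - t) *: x.
  by rewrite /d scalerBr scalerBl scale1r addrCA.
have := hconv y x t Xy Xx; rewrite (ltW t0) t1 => /(_ isT).
rewrite -xE /ile /iadd /iscale (ltW t0) subr_ge0 t1 /= => -[c1 c2].
have b1 := igH_bound1 (igH (F (x + t *: d)) (F x)) (ilin Le (t *: d)).
have b2 := igH_bound2 (igH (F (x + t *: d)) (F x)) (ilin Le (t *: d)).
rewrite eq1 inorm_scale ?(ltW (andP hlt2).1) // vdd in b1 b2.
rewrite ilin_scale1 // in b1; rewrite ilin_scale2 // in b2.
have hEb : inorm (E (t *: d)) < eps := hE' _ hlt2.
apply: (core t0 (ltW vd0) hEb _ _ b1 b2).
  rewrite mulrBr; move: c1; lra.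
rewrite mulrBr; move: c2; lra.
Qed.
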